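(* For a finite group $G$ the following are equivalent: (1) $G$ is nilpotent; (2) every abnormal subgroup of $G$ is $\mathrm{F}^*(G)$-subnormal; (3) the normalizers of all Sylow subgroups of $G$ are $\mathrm{F}^*(G)$-subnormal; (4) all cyclic primary subgroups of $G$ are $\mathrm{F}^*(G)$-subnormal; (5) all Sylow subgroups of $G$ are $\mathrm{F}^*(G)$-subnormal.
   Context: For a subgroup $R$ of $G$, a subgroup $H$ of $G$ is $R$-subnormal if $H$ is subnormal in $\langle H,R\rangle$. $\mathrm{F}^*(G)$ is the generalized Fitting subgroup (the largest normal quasinilpotent subgroup). A subgroup $H$ is abnormal in $G$ if $g\in\langle H,H^g\rangle$ for all $g\in G$. A cyclic primary subgroup is a cyclic subgroup of prime power order. *)

(* Defs.v *)
From mathcomp Require Import all_boot all_fingroup all_solvable.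
Set Implicit Arguments. Unset Strict Implicit. Unset Printing Implicit Defensive.
Local Open Scope group_scope.

Section Defs.
Variable gT : finGroupType.
Implicit Types (X G H R U V : {group gT}).

(* C_X(U/V): elements of X acting trivially (by conjugation) on U/V *)
Definition factor_cent (X U V : {set gT}) : {set gT} :=
  [set x in X | [forall u in U, [~ u, x] \in V]].

(* X is quasinilpotent: every element of X induces an inner automorphism on
   every chief factor U/V of X, i.e. X = U * C_X(U/V). *)
Definition quasinilpotent X : bool :=
  [forall U : {group gT}, forall V : {group gT},
     chief_factor X V U ==> (U * factor_cent X U V == X)].

(* F*(G): the largest normal quasinilpotent subgroup, realized as the join of
   all normal quasinilpotent subgroups of G. *)
Definition Fstar (G : {set gT}) : {set gT} :=
  <<\bigcup_(N : {group gT} | (N <| G) && quasinilpotent N) N>>.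

Definition R_subnormal (R H : {set gT}) : bool := H <|<| <<H :|: R>>.

Definition abnormal (H G : {set gT}) : bool :=
  (H \subset G) && [forall g in G, g \in <<H :|: H :^ g>>].

Definition cyclic_primary (H G : {set gT}) : Prop :=
  [/\ H \subset G, cyclic H & exists p : nat, prime p /\ p.-group H].
End Defs.

(* Main.v *)
Require Import Defs.
From mathcomp Require Import all_boot all_fingroup all_solvable.
Set Implicit Arguments. Unset Strict Implicit. Unset Printing Implicit Defensive.
Local Open Scope group_scope.

Section S.
Variable gT : finGroupType.
Implicit Types (G H K N U V X Z T : {group gT}).

Lemma Fstar_group_set (G : {set gT}) : group_set (Fstar G).
Proof. rewrite /Fstar; exact: (valP [group of <<_>>]). Qed.
Canonical Fstar_group (G : {set gT}) := Group (Fstar_group_set G).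

Lemma Fstar_normal G : Fstar G <| G.
Proof.
rewrite /normal /Fstar gen_subG; apply/andP; split.
  by apply/bigcupsP=> N /andP[/andP[]].
apply: norms_gen; apply: norms_bigcup.
by apply/bigcapsP=> N /andP[/andP[_ nNG] _].
Qed.

Lemma sub_Fstar G N : N <| G -> quasinilpotent N -> N \subset Fstar G.
Proof.
move=> nsNG qN; rewrite /Fstar sub_gen //.
by apply: (bigcup_sup N); rewrite nsNG qN.
Qed.

Lemma fc_group_set N U V : N \subset 'N(V) -> group_set (factor_cent N U V).
Proof.
move=> nVN; apply/group_setP; split.
  rewrite inE group1; apply/forall_inP=> u _; by rewrite commg1 group1.
move=> x y; rewrite !inE => /andP[xN /forall_inP cx] /andP[yN /forall_inP cy].
rewrite groupM //; apply/forall_inP=> u uU.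
rewrite commgMJ groupM ?cy // memJ_norm ?cx //.
exact: (subsetP nVN).
Qed.


Lemma Mdecomp G Z N T X :
  Z <| G -> N <| G -> Z \proper N ->
  (forall K : {group gT}, K <| G -> Z \proper K -> K \subset N -> K = N) ->
  T \subset N -> N \subset 'N(T) -> Z \subset T -> T \subset X ->
  (forall K : {group gT}, K \subset N -> [~: T, K] \subset Z -> K \subset X) ->
  N \subset X.
Proof.
move=> nsZG nsNG ltZN minN sTN nTN sZT sTX hK.
have sNG := normal_sub nsNG; have nNG := normal_norm nsNG.
have nZG := normal_norm nsZG.
have [M0 minM0 _] := mingroup_exists
  (gP := fun K : {group gT} => [&& N \subset 'N(K), Z \proper K & K \subset N])
  (G := N) (introT and3P (And3 (normG N) ltZN (subxx N))).
case/mingroupP: minM0 => /and3P[nM0N ltZM0 sM0N] minM0.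
have sLN : <<class_support M0 G>> \subset N.
  by rewrite gen_subG class_support_sub_norm.
have defN : <<class_support M0 G>> = N.
  apply: (congr1 val (minN [group of <<class_support M0 G>>] _ _ _)) => //.
    by rewrite /normal (subset_trans sLN sNG) norms_gen ?class_support_norm.
  apply: (proper_sub_trans ltZM0).
  by rewrite sub_gen // sub_class_support.
rewrite -defN gen_subG class_supportEr; apply/bigcupsP=> h hG.
have hGi : h^-1 \in G by rewrite groupV.
have NJ : N :^ h^-1 = N by apply: (normsP nNG).
have ZJ : Z :^ h^-1 = Z by apply: (normsP nZG).
have NJ' : N :^ h = N by apply: (normsP nNG).
have ZJ' : Z :^ h = Z by apply: (normsP nZG).
set T' := (T :^ h^-1)%G.
have nT'N : N \subset 'N(T') by rewrite /T' /= normJ -NJ conjSg.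
have sZT' : Z \subset T' by rewrite /T' /= -ZJ conjSg.
have sT'N : T' \subset N by rewrite /T' /= -NJ conjSg.
have nM0 : T' \subset 'N(M0) := subset_trans sT'N nM0N.
have nT'M0 : M0 \subset 'N(T') := subset_trans sM0N nT'N.
case: (boolP (Z \proper (T' :&: M0))) => [ltZW | ltZW].
  have eW := minM0 [group of T' :&: M0].
  have : T' :&: M0 = M0.
    apply: eW; last exact: subsetIr.
    by rewrite /= normsI // ltZW (subset_trans (subsetIr _ _) sM0N).
  move/setIidPr => sM0T'.
  apply: subset_trans sTX; by rewrite -(conjsgKV h T) conjSg.
apply: hK; first by rewrite -NJ' conjSg.
have -> : T = (T' :^ h)%G by apply: val_inj; rewrite /= conjsgKV.
rewrite /= -conjsRg -ZJ' conjSg.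
have sZW : Z \subset T' :&: M0 by rewrite subsetI sZT' (proper_sub ltZM0).
have : T' :&: M0 \subset Z.
  by move: ltZW; rewrite properE sZW /= negbK.
apply: subset_trans; rewrite subsetI commg_subl nT'M0 commg_subr nM0.
done.
Qed.

Lemma cent_Fstar G : 'C_G(Fstar G) \subset Fstar G.
Proof.
set F := Fstar_group G.
have nsFG : F <| G := Fstar_normal G.
have nFG := normal_norm nsFG.
have nsCG : 'C_G(F) <| G.
  by have := subcent_normal G F; rewrite (setIidPl nFG).
apply/idPn => nCF.
set Z := ('C_G(F) :&: F)%G.
have nsZG : Z <| G by apply: normalI.
have ltZC : Z \proper 'C_G(F) by rewrite properE subsetIl /= subsetI subxx.
have [N minN _] := mingroup_exists
  (gP := fun K : {group gT} => [&& K <| G, Z \proper K & K \subset 'C_G(F)])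
  (G := 'C_G(F)%G) (introT and3P (And3 nsCG ltZC (subxx _))).
case/mingroupP: minN => /and3P[nsNG ltZN sNC] minN.
have sZN := proper_sub ltZN.
have cZN : N \subset 'C(Z).
  apply: subset_trans sNC _; apply: subset_trans (subsetIr _ _) _.
  by apply: centS; apply: subsetIr.
have minN' : forall K : {group gT}, K <| G -> Z \proper K -> K \subset N -> K = N.
  move=> K nsKG ltZK sKN.
  by apply: val_inj; apply: minN (sKN); rewrite nsKG ltZK (subset_trans sKN sNC).
have nZN : N \subset 'N(Z) := subset_trans (normal_sub nsNG) (normal_norm nsZG).
have cz : forall x z, x \in N -> z \in Z -> commute x z.
  by move=> x z xN zZ; apply: (centP (subsetP cZN x xN)).
have qN : quasinilpotent N.
  apply/forallP=> U; apply/forallP=> V; apply/implyP=> /andP[maxV nsUN].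
  case/maxgroupP: maxV => /andP[ltVU nVN] maxV.
  have sUN := normal_sub nsUN; have nUN := normal_norm nsUN.
  have sVU := proper_sub ltVU.
  set fc := factor_cent N U V.
  have sfcN : fc \subset N by apply/subsetP=> x; rewrite inE => /andP[].
  pose fcG := Group (fc_group_set U nVN).
  rewrite eqEsubset mul_subG //=.
  case: (boolP (U \subset V <*> Z)) => [sUVZ | nsUVZ].
    have sNfc : N \subset fc.
      apply/subsetP=> x xN; rewrite inE xN; apply/forall_inP=> u uU.
      move: (subsetP sUVZ u uU); rewrite norm_joinEr ?(subset_trans sZN nVN) //.
      case/mulsgP=> v z vV zZ ->.
      rewrite commMgJ.
      have -> : [~ z, x] = 1 by apply/eqP/commgP; apply: commute_sym; apply: cz.
      rewrite mulg1 memJ_norm ?(subsetP nVN) ?(subsetP sZN) //.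
      by rewrite commgEl groupM ?groupV ?memJ_norm ?(subsetP nVN).
    by apply/subsetP=> x xN; rewrite -[x]mul1g mem_mulg ?(subsetP sNfc).
  have sUZV : U :&: Z \subset V.
    have sWU : (U :&: Z) <*> V \subset U by rewrite join_subG subsetIl sVU.
    have nWN : N \subset 'N((U :&: Z) <*> V) by apply: normsY => //; apply: normsI.
    case: (eqVproper sWU) => [eWU | ltWU].
      case/negP: nsUVZ; rewrite -eWU join_subG joing_subl andbT.
      exact: subset_trans (subsetIr _ _) (joing_subr _ _).
    have := maxV [group of (U :&: Z) <*> V]; rewrite /= ltWU nWN joing_subr.
    move=> /(_ isT isT) <-; exact: joing_subl.
  have sNX : N \subset U <*> fcG.
    apply: (Mdecomp nsZG nsNG ltZN minN' (T := (U <*> Z)%G)).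
    - by rewrite join_subG sUN sZN.
    - exact: normsY.
    - exact: joing_subr.
    - rewrite join_subG joing_subl /=.
      apply: subset_trans (joing_subr U fcG).
      apply/subsetP=> z zZ; rewrite inE (subsetP sZN) //; apply/forall_inP=> u uU.
      have /commgP/eqP-> : commute u z by apply: cz => //; apply: (subsetP sUN).
      exact: group1.
    move=> K sKN cTK; apply: subset_trans (joing_subr _ _).
    apply/subsetP=> k kK; rewrite inE (subsetP sKN) //.
    apply/forall_inP=> u uU; apply: (subsetP sUZV); rewrite inE; apply/andP; split.
      by rewrite commgEl groupM ?groupV ?memJ_norm ?(subsetP nUN) ?(subsetP sKN).
    exact: (subsetP cTK) (mem_commg (subsetP (joing_subl U Z) u uU) kK).
  by move: sNX; rewrite norm_joinEr // (subset_trans sfcN nUN).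
have := sub_Fstar nsNG qN => sNF.
move: ltZN; rewrite properE => /andP[_ /negP]; apply.
by rewrite subsetI sNC; exact: sNF.
Qed.

Lemma subnormal_pcore p X K : p.-group X -> X <|<| K -> X \subset 'O_p(K).
Proof.
move=> pX /subnormalP[s Hs <-].
elim/last_ind: s Hs => [|s L IH] /=.
  by move=> _; apply: pcore_max => //; apply: normal_refl.
rewrite rcons_path last_rcons => /andP[Hs nsL].
apply: subset_trans (IH Hs) _; apply: pcore_max; first exact: pcore_pgroup.
exact: char_normal_trans (pcore_char _ _) nsL.
Qed.

Lemma commF p G X K : p.-group X -> X <|<| K -> Fstar G \subset K -> K \subset G ->
  [~: X, Fstar G] \subset 'O_p(Fstar G).
Proof.
move=> pX snXK sFK sKG.
set F := Fstar_group G.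
have nFG := normal_norm (Fstar_normal G).
set O := 'O_p(K)%G.
have sXO : X \subset O := subnormal_pcore pX snXK.
have nOK : K \subset 'N(O) := normal_norm (pcore_normal _ _).
have sOK : O \subset K := pcore_sub _ _.
have nOF : F \subset 'N(O) := subset_trans sFK nOK.
apply: subset_trans (commSg _ sXO) _.
have sOF : [~: O, F] \subset O :&: F.
  rewrite subsetI commg_subl nOF commg_subr /=.
  exact: subset_trans sOK (subset_trans sKG nFG).
apply: subset_trans sOF _; apply: pcore_max.
  exact: pgroupS (subsetIl _ _) (pcore_pgroup _ _).
by rewrite /normal subsetIr normsI ?normG.
Qed.

Lemma OpF_sub p G (P : {group gT}) : p.-Sylow(G) P -> 'O_p(Fstar G) \subset P.
Proof.
move=> sylP; apply: (subset_trans _ (pcore_sub_Hall sylP)).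
apply: pcore_max; first exact: pcore_pgroup.
exact: char_normal_trans (pcore_char _ _) (Fstar_normal G).
Qed.

Lemma key_nil G :
  (forall p (P : {group gT}), prime p -> p.-Sylow(G) P -> Fstar G \subset 'N(P)) ->
  nilpotent G.
Proof.
move=> hN.
set F := Fstar_group G.
have nsFG := Fstar_normal G; have sFG := normal_sub nsFG; have nFG := normal_norm nsFG.
have cFF := cent_Fstar G.
have trivOQ : forall p q (Q : {group gT}), prime q -> q != p -> q.-Sylow(G) Q ->
    [~: 'O_p(F), Q] = 1.
  move=> p q Q pr_q neqp sylQ.
  have sQG := pHall_sub sylQ.
  have cop : coprime #|'O_p(F)| #|Q|.
    apply: (pnat_coprime (pcore_pgroup p F)).
    by apply: sub_pgroup (pHall_pgroup sylQ) => r; rewrite !inE => /eqP->.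
  apply/trivgP; rewrite -(coprime_TIg cop) subsetI commg_subl commg_subr.
  rewrite (subset_trans sQG (normal_norm (char_normal_trans (pcore_char _ _) nsFG))).
  exact: subset_trans (pcore_sub _ _) (hN q Q pr_q sylQ).
have sFPO : forall p (P : {group gT}), prime p -> p.-Sylow(G) P ->
    [~: F, P] \subset 'O_p(F).
  move=> p P pr_p sylP; apply: pcore_max.
    by apply: pgroupS (pHall_pgroup sylP); rewrite commg_subr (hN p P pr_p sylP).
  by rewrite /normal commg_subl (subset_trans (pHall_sub sylP) nFG) commg_norml.
have QnP : forall p q (P Q : {group gT}), prime p -> prime q -> q != p ->
    p.-Sylow(G) P -> q.-Sylow(G) Q -> Q \subset 'N(P).
  move=> p q P Q pr_p pr_q nqp sylP sylQ.
  have sPG := pHall_sub sylP; have sQG := pHall_sub sylQ.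
  have c3 : [~: P, Q, F] = 1.
    apply: three_subgroup.
      apply/trivgP; rewrite (commGC Q F).
      rewrite -(trivOQ q p P pr_p _ sylP); last by rewrite eq_sym.
      exact: commSg (sFPO q Q pr_q sylQ).
    apply/trivgP; rewrite -(trivOQ p q Q pr_q nqp sylQ).
    exact: commSg (sFPO p P pr_p sylP).
  have sPQF : [~: P, Q] \subset F.
    apply: subset_trans cFF; rewrite subsetI; apply/andP; split.
      apply: subset_trans (commSg Q sPG) _; rewrite commg_subl.
      exact: subset_trans sQG (normG G).
    by apply/commG1P.
  have nPF := hN p P pr_p sylP.
  have nsPK : P <| (P <*> F)%G by rewrite /normal joing_subl join_subG normG nPF.
  have hallPK : p.-Hall(P <*> F) P.
    by apply: pHall_subl (joing_subl _ _) _ sylP; rewrite join_subG sPG sFG.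
  apply/subsetP=> y yQ; rewrite inE; apply/subsetP=> _ /imsetP[x xP ->].
  rewrite (mem_normal_Hall hallPK nsPK).
    by rewrite p_eltJ (mem_p_elt (pHall_pgroup sylP) xP).
  rewrite conjg_mulR /= norm_joinEr // mem_mulg //.
  by apply: (subsetP sPQF); apply: mem_commg.
have nsP : forall p (P : {group gT}), prime p -> p.-Sylow(G) P -> P <| G.
  move=> p P pr_p sylP.
  have sPG := pHall_sub sylP.
  have defG := @Sylow_transversal_gen _ [set Q : {group gT} | Q \subset 'N_G(P)] G.
  rewrite /normal sPG -defG ?gen_subG /=.
  - by apply/bigcupsP => Q; rewrite inE subsetI => /andP[_ ->].
  - by move=> Q; rewrite inE => /subset_trans; apply; apply: subsetIl.
  move=> r; rewrite mem_primes => /and3P[pr_r _ _].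
  case: (eqVneq r p) => [->|nrp].
    by exists P; rewrite ?inE ?subsetI ?sPG ?normG.
  have [Q sylQ] := Sylow_exists r G; exists Q => //.
  by rewrite inE subsetI (pHall_sub sylQ) (QnP p r P Q).
have sGF : G \subset 'F(G).
  rewrite -{1}(@Sylow_transversal_gen _ [set Q : {group gT} | Q \subset 'F(G)] G).
  - by rewrite gen_subG; apply/bigcupsP => Q; rewrite inE.
  - by move=> Q; rewrite inE => /subset_trans; apply; apply: Fitting_sub.
  move=> r; rewrite mem_primes => /and3P[pr_r _ _].
  have [Q sylQ] := Sylow_exists r G; exists Q => //.
  rewrite inE; apply: subset_trans (pcore_max (pHall_pgroup sylQ) (nsP r Q pr_r sylQ)) _.
  by rewrite -p_core_Fitting pcore_sub.
exact: nilpotentS sGF (Fitting_nil G).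
Qed.

Lemma nil_Rsub G H : nilpotent G -> H \subset G -> R_subnormal (Fstar G) H.
Proof.
move=> nG sHG; rewrite /R_subnormal.
apply: (nilpotent_subnormal (G := [group of <<H :|: Fstar G>>])).
  apply: nilpotentS nG; rewrite gen_subG subUset sHG.
  exact: normal_sub (Fstar_normal G).
by rewrite sub_gen // subsetUl.
Qed.

Lemma Ns_abnormal p G (P : {group gT}) : p.-Sylow(G) P -> abnormal 'N_G(P) G.
Proof.
move=> sylP; apply/andP; split; first exact: subsetIl.
apply/forall_inP => g gG.
have sPG := pHall_sub sylP.
set N := 'N_G(P).
set J := [group of <<N :|: N :^ g>>].
have sNG : N \subset G := subsetIl _ _.
have sNgG : N :^ g \subset G by rewrite -(conjGid gG) conjSg.
have sJG : J \subset G by rewrite gen_subG subUset sNG.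
have sPN : P \subset N by rewrite subsetI sPG normG.
have sNJ : N \subset J by rewrite sub_gen // subsetUl.
have sPJ : P \subset J := subset_trans sPN sNJ.
have sPgJ : P :^ g \subset J.
  by apply: subset_trans (sub_gen (subsetUr _ _)); rewrite conjSg.
have sylJ : p.-Sylow(J) P := pHall_subl sPJ sJG sylP.
have sylJg : p.-Sylow(J) (P :^ g)%G.
  by apply: pHall_subl sPgJ sJG _; rewrite pHallJ.
have [j jJ eq] := Sylow_trans sylJ sylJg.
have gjN : g * j^-1 \in N.
  rewrite inE groupM ?groupV ?gG ?(subsetP sJG j jJ) //=.
  by apply/normP; rewrite conjsgM /= eq conjsgK.
have : (g * j^-1) * j \in J by rewrite groupM //; apply: (subsetP sNJ).
by rewrite mulgKV.
Qed.

End S.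

Unset Implicit Arguments.

Theorem theorem11 (gT : finGroupType) (G : {group gT}) :
  [<-> nilpotent G;
       forall H : {group gT}, abnormal H G -> R_subnormal (Fstar G) H;
       forall (p : nat) (P : {group gT}), prime p -> P \in 'Syl_p(G) ->
         R_subnormal (Fstar G) 'N_G(P);
       forall H : {group gT}, cyclic_primary H G -> R_subnormal (Fstar G) H;
       forall (p : nat) (P : {group gT}), prime p -> P \in 'Syl_p(G) ->
         R_subnormal (Fstar G) P].
Proof.
have sFG := normal_sub (Fstar_normal G).
tfae.
- by move=> nG H /andP[sHG _]; apply: nil_Rsub.
- move=> h2 p P pr_p; rewrite inE => sylP; apply: h2; exact: Ns_abnormal sylP.
- move=> h3; suff nG : nilpotent G by move=> H [sHG _ _]; apply: nil_Rsub.
  apply: key_nil => p P pr_p sylP; rewrite -commg_subl.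
  have sPG := pHall_sub sylP.
  have sn := h3 p P pr_p ltac:(by rewrite inE).
  have snP := subnormal_trans (normal_subnormal (normalSG sPG)) sn.
  apply: subset_trans (OpF_sub sylP).
  apply: (commF (pHall_pgroup sylP) snP); first by rewrite sub_gen // subsetUr.
  by rewrite gen_subG subUset subsetIl.
- move=> h4; suff nG : nilpotent G by move=> p P _; rewrite inE => /pHall_sub; apply: nil_Rsub.
  apply: key_nil => p P pr_p sylP; rewrite -commg_subl.
  have sPG := pHall_sub sylP.
  rewrite /commutator gen_subG; apply/subsetP => _ /imset2P[x f xP fF ->].
  have pX : p.-group <[x]> by apply: pgroupS (pHall_pgroup sylP); rewrite cycle_subG.
  have hx := h4 <[x]>%G.
  have sn : <[x]> <|<| <<<[x]> :|: Fstar G>>.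
    apply: hx; split; [by rewrite cycle_subG (subsetP sPG) | exact: cycle_cyclic |].
    by exists p.
  have := commF pX sn (sub_gen (subsetUr _ _)).
  rewrite gen_subG subUset cycle_subG (subsetP sPG) // sFG => /(_ isT).
  move/subset_trans/(_ (OpF_sub sylP)) => sub.
  exact: (subsetP sub) (mem_commg (cycle_id x) fF).
move=> h5; apply: key_nil => p P pr_p sylP; rewrite -commg_subl.
have sPG := pHall_sub sylP.
apply: subset_trans (OpF_sub sylP).
apply: (commF (pHall_pgroup sylP) (h5 p P pr_p _)); first by rewrite inE.
  by rewrite sub_gen // subsetUr.
by rewrite gen_subG subUset sPG.
Qed.
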